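(* Let $(X,d)$ be a reflexive Busemann convex geodesic metric space and let $A,B\subseteq X$ be nonempty, closed and convex, with $A$ bounded. Let $T:A\cup B\to A\cup B$ be a noncyclic relatively nonexpansive mapping, and suppose the pair $(A,B)$ has proximal normal structure. Then there exists $(x,y)\in A\times B$ such that $x=Tx$, $y=Ty$ and $d(x,y)=\operatorname{dist}(A,B)$.
   Context: $\operatorname{dist}(A,B)=\inf\{d(x,y):x\in A,y\in B\}$, $\delta(x,A)=\sup\{d(x,y):y\in A\}$, $\delta(A,B)=\sup\{d(x,y):x\in A,y\in B\}$. A geodesic space is one in which any two points are joined by a geodesic segment; a subset is convex if it contains every geodesic segment joining two of its points. $X$ is Busemann convex if for any geodesics $c_1:[0,l_1]\to X$, $c_2:[0,l_2]\to X$, $d(c_1(tl_1),c_2(tl_2))\le (1-t)d(c_1(0),c_2(0))+t\,d(c_1(l_1),c_2(l_2))$ for all $t\in[0,1]$. $X$ is reflexive if every decreasing chain of nonempty closed convex bounded subsets has nonempty intersection. $T$ is relatively nonexpansive if $d(Tx,Ty)\le d(x,y)$ for all $x\in A$, $y\in B$; it is noncyclic if $T(A)\subseteq A$ and $T(B)\subseteq B$. A pair $(H_1,H_2)$ is proximal if for every $(a,b)\in H_1\times H_2$ there is $(a',b')\in H_1\times H_2$ with $d(a,b')=d(a',b)=\operatorname{dist}(H_1,H_2)$. A convex pair $(K_1,K_2)$ has proximal normal structure if for every closed bounded convex proximal pair $(H_1,H_2)$ with $H_1\subseteq K_1$, $H_2\subseteq K_2$, $\operatorname{dist}(H_1,H_2)=\operatorname{dist}(K_1,K_2)$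 and $\delta(H_1,H_2)>\operatorname{dist}(H_1,H_2)$, there exists $(x_1,x_2)\in H_1\times H_2$ with $\delta(x_1,H_2)<\delta(H_1,H_2)$ and $\delta(x_2,H_1)<\delta(H_1,H_2)$. *)

(* Defs.v *)
From Stdlib Require Import Reals.
From Coquelicot Require Import Coquelicot.
Open Scope R_scope.

Section MetricDefs.
Context {X : Type} (d : X -> X -> R).

Definition is_metric : Prop :=
  (forall x y, 0 <= d x y) /\
  (forall x y, d x y = 0 <-> x = y) /\
  (forall x y, d x y = d y x) /\
  (forall x y z, d x z <= d x y + d y z).

(* c : [0,l] -> X is a geodesic (isometric embedding of [0,l]); values of c
   outside [0,l] are irrelevant *)
Definition geodesic (c : R -> X) (l : R) : Prop :=
  0 <= l /\
  forall s t, 0 <= s <= l -> 0 <= t <= l -> d (c s) (c t) = Rabs (s - t).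

Definition geodesic_joining (c : R -> X) (x y : X) : Prop :=
  geodesic c (d x y) /\ c 0 = x /\ c (d x y) = y.

Definition geodesic_space : Prop :=
  forall x y, exists c, geodesic_joining c x y.

Definition convex (A : X -> Prop) : Prop :=
  forall x y c, A x -> A y -> geodesic_joining c x y ->
    forall t, 0 <= t <= d x y -> A (c t).

Definition busemann_convex : Prop :=
  forall c1 l1 c2 l2, geodesic c1 l1 -> geodesic c2 l2 ->
    forall t, 0 <= t <= 1 ->
      d (c1 (t * l1)) (c2 (t * l2)) <=
        (1 - t) * d (c1 0) (c2 0) + t * d (c1 l1) (c2 l2).

Definition nonempty (A : X -> Prop) : Prop := exists x, A x.

Definition metric_closed (A : X -> Prop) : Prop :=
  forall x, (forall eps, 0 < eps -> exists a, A a /\ d x a < eps) -> A x.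

Definition metric_bounded (A : X -> Prop) : Prop :=
  exists x0 M, forall a, A a -> d x0 a <= M.

Definition reflexive : Prop :=
  forall F : (X -> Prop) -> Prop,
    (exists C, F C) ->
    (forall C1 C2, F C1 -> F C2 ->
        (forall x, C1 x -> C2 x) \/ (forall x, C2 x -> C1 x)) ->
    (forall C, F C -> nonempty C /\ metric_closed C /\ convex C /\ metric_bounded C) ->
    exists x, forall C, F C -> C x.

Definition dist_sets (A B : X -> Prop) : R :=
  real (Glb_Rbar (fun r => exists x y, A x /\ B y /\ r = d x y)).

Definition delta_pt (x : X) (A : X -> Prop) : R :=
  real (Lub_Rbar (fun r => exists y, A y /\ r = d x y)).

Definition delta (A B : X -> Prop) : R :=
  real (Lub_Rbar (fun r => exists x y, A x /\ B y /\ r = d x y)).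

Definition relatively_nonexpansive (A B : X -> Prop) (T : X -> X) : Prop :=
  forall x y, A x -> B y -> d (T x) (T y) <= d x y.

Definition noncyclic (A B : X -> Prop) (T : X -> X) : Prop :=
  (forall x, A x -> A (T x)) /\ (forall y, B y -> B (T y)).

Definition proximal_pair (H1 H2 : X -> Prop) : Prop :=
  forall a b, H1 a -> H2 b ->
    exists a' b', H1 a' /\ H2 b' /\
      d a b' = dist_sets H1 H2 /\ d a' b = dist_sets H1 H2.

Definition proximal_normal_structure (K1 K2 : X -> Prop) : Prop :=
  forall H1 H2 : X -> Prop,
    nonempty H1 -> nonempty H2 ->
    metric_closed H1 -> metric_closed H2 -> metric_bounded H1 -> metric_bounded H2 ->
    convex H1 -> convex H2 -> proximal_pair H1 H2 ->
    (forall x, H1 x -> K1 x) -> (forall x, H2 x -> K2 x) ->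
    dist_sets H1 H2 = dist_sets K1 K2 ->
    delta H1 H2 > dist_sets H1 H2 ->
    exists x1 x2, H1 x1 /\ H2 x2 /\
      delta_pt x1 H2 < delta H1 H2 /\ delta_pt x2 H1 < delta H1 H2.

End MetricDefs.

(* Main.v *)
Require Import Defs.
From mathcomp Require boolp classical_sets.
From Corelib Require ssrbool.
From Stdlib Require Import Reals Lra Classical.
From Coquelicot Require Import Coquelicot.
Open Scope R_scope.


Lemma glb_spec (E : R -> Prop) :
  (exists r, E r) -> (forall r, E r -> 0 <= r) ->
  (forall r, E r -> real (Glb_Rbar E) <= r) /\
  (forall b, (forall r, E r -> b <= r) -> b <= real (Glb_Rbar E)).
Proof.
intros [r0 Hr0] Hlb.
destruct (Glb_Rbar_correct E) as [H1 H2].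
destruct (Glb_Rbar E) as [m| |] eqn:Eg; simpl.
- split.
  + intros r Hr. specialize (H1 r Hr). simpl in H1. exact H1.
  + intros b Hb. apply (H2 (Finite b)). intros r Hr. simpl. apply Hb; exact Hr.
- exfalso. specialize (H1 r0 Hr0). simpl in H1. exact H1.
- exfalso. assert (H := H2 (Finite 0)). simpl in H. apply H. intros r Hr. simpl. apply Hlb; exact Hr.
Qed.

Lemma lub_spec (E : R -> Prop) :
  (exists r, E r) -> (exists M, forall r, E r -> r <= M) ->
  (forall r, E r -> r <= real (Lub_Rbar E)) /\
  (forall b, (forall r, E r -> r <= b) -> real (Lub_Rbar E) <= b).
Proof.
intros [r0 Hr0] [M HM].
destruct (Lub_Rbar_correct E) as [H1 H2].
destruct (Lub_Rbar E) as [m| |] eqn:Eg; simpl.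
- split.
  + intros r Hr. specialize (H1 r Hr). simpl in H1. exact H1.
  + intros b Hb. apply (H2 (Finite b)). intros r Hr. simpl. apply Hb; exact Hr.
- exfalso. assert (H := H2 (Finite M)). simpl in H. apply H. intros r Hr. simpl. apply HM; exact Hr.
- exfalso. specialize (H1 r0 Hr0). simpl in H1. exact H1.
Qed.

Lemma small_le (a b : R) : (forall n : nat, a <= b + / (INR n + 1)) -> a <= b.
Proof.
intros H. destruct (Rle_or_lt a b) as [h|h]; [exact h|exfalso].
destruct (archimed (/ (a - b))) as [H1 _].
assert (Hp : 0 < / (a - b)) by (apply Rinv_0_lt_compat; lra).
assert (Hz : (0 <= up (/ (a - b)))%Z).
{ apply le_IZR. lra. }
destruct (IZN _ Hz) as [n Hn]. rewrite Hn in H1. rewrite <- INR_IZR_INZ in H1.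
specialize (H n).
assert (Hn1 : 0 < INR n + 1) by (pose proof (pos_INR n); lra).
assert (/ (INR n + 1) < a - b).
{ rewrite <- (Rinv_inv (a - b)). apply Rinv_lt_contravar.
  - apply Rmult_lt_0_compat; lra.
  - lra. }
lra.
Qed.

Lemma inv_pos_n (n : nat) : 0 < / (INR n + 1).
Proof. apply Rinv_0_lt_compat. pose proof (pos_INR n); lra. Qed.

Lemma inv_mono_n (m n : nat) : (m <= n)%nat -> / (INR n + 1) <= / (INR m + 1).
Proof.
intros H. apply Rinv_le_contravar. pose proof (pos_INR m); lra.
apply le_INR in H. lra.
Qed.

Lemma m_nonneg {X} (d : X -> X -> R) : is_metric d -> forall x y, 0 <= d x y.
Proof. intros [H _]; exact H. Qed.
Lemma m_eq0 {X} (d : X -> X -> R) : is_metric d -> forall x y, d x y = 0 <-> x = y.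
Proof. intros [_ [H _]]; exact H. Qed.
Lemma m_sym {X} (d : X -> X -> R) : is_metric d -> forall x y, d x y = d y x.
Proof. intros [_ [_ [H _]]]; exact H. Qed.
Lemma m_tri {X} (d : X -> X -> R) : is_metric d -> forall x y z, d x z <= d x y + d y z.
Proof. intros [_ [_ [_ H]]]; exact H. Qed.
Lemma m_refl {X} (d : X -> X -> R) : is_metric d -> forall x, d x x = 0.
Proof. intros Hm x. apply (m_eq0 d Hm). reflexivity. Qed.

Lemma geo_d {X} (d : X -> X -> R) c x y :
  geodesic_joining d c x y -> forall t, 0 <= t <= d x y -> d x (c t) = t.
Proof.
intros [[Hl Hg] [H0 H1]] t Ht. rewrite <- H0 at 1. rewrite Hg; [|lra|lra].
rewrite Rabs_left1; lra.
Qed.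

Lemma geo_d2 {X} (d : X -> X -> R) c x y :
  geodesic_joining d c x y -> forall t, 0 <= t <= d x y -> d (c t) y = d x y - t.
Proof.
intros [[Hl Hg] [H0 H1]] t Ht. rewrite <- H1 at 1. rewrite Hg; [|lra|lra].
rewrite Rabs_left1; lra.
Qed.

Lemma tau_ex (t l : R) : 0 <= t <= l -> exists tau, 0 <= tau <= 1 /\ t = tau * l.
Proof.
intros Ht. destruct (Req_dec l 0) as [E|E].
- exists 0. split; [lra|]. subst. lra.
- exists (t / l). split.
  + split. apply Rmult_le_pos; [lra|]. left; apply Rinv_0_lt_compat; lra.
    apply (Rmult_le_reg_r l); [lra|]. unfold Rdiv. rewrite Rmult_assoc, Rinv_l; lra.
  + field. exact E.
Qed.

Lemma bus_j {X} (d : X -> X -> R) c1 c2 x x' y y' tau :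
  busemann_convex d -> geodesic_joining d c1 x x' -> geodesic_joining d c2 y y' ->
  0 <= tau <= 1 ->
  d (c1 (tau * d x x')) (c2 (tau * d y y')) <= (1 - tau) * d x y + tau * d x' y'.
Proof.
intros Hb [G1 [A1 B1]] [G2 [A2 B2]] Ht.
pose proof (Hb c1 (d x x') c2 (d y y') G1 G2 tau Ht) as H.
rewrite A1, B1, A2, B2 in H. exact H.
Qed.

Lemma const_geo {X} (d : X -> X -> R) z : is_metric d -> geodesic_joining d (fun _ => z) z z.
Proof.
intros Hm. unfold geodesic_joining, geodesic. rewrite (m_refl d Hm z). split; [split|split; reflexivity].
- lra.
- intros s t Hs Ht. assert (s = 0) by lra. assert (t = 0) by lra.
  subst. rewrite Rminus_0_r, Rabs_R0. reflexivity.
Qed.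

Lemma ball_geo {X} (d : X -> X -> R) c x x' z r t :
  is_metric d -> busemann_convex d -> geodesic_joining d c x x' ->
  0 <= t <= d x x' -> d z x <= r -> d z x' <= r -> d z (c t) <= r.
Proof.
intros Hm Hb Hc Ht H1 H2. destruct (tau_ex t (d x x') Ht) as [tau [Htau ->]].
pose proof (bus_j d c (fun _ => z) x x' z z tau Hb Hc (const_geo d z Hm) Htau) as H.
rewrite (m_sym d Hm z (c _)). rewrite (m_sym d Hm x z), (m_sym d Hm x' z) in H.
apply (Rle_trans _ _ _ H).
assert ((1 - tau) * d z x <= (1 - tau) * r) by (apply Rmult_le_compat_l; lra).
assert (tau * d z x' <= tau * r) by (apply Rmult_le_compat_l; lra). lra.
Qed.
Lemma ZL_prop (T:Type)(t0:T)(R:T->T->Prop):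
  (forall t, R t t) -> (forall r s t, R r s -> R s t -> R r t) ->
  (forall A: T->Prop, (forall s t, A s -> A t -> R s t \/ R t s) -> exists t, forall s, A s -> R s t) ->
  exists t, forall s, R t s -> R s t.
Proof.
intros Hr Ht Hc.
pose proof (fun a b => boolp.asboolP (R a b)) as E.
assert (I1 : forall a b, R a b -> boolp.asbool (R a b) = true) by (intros a b h; apply (ssrbool.introT (E a b)); exact h).
assert (I2 : forall a b, boolp.asbool (R a b) = true -> R a b) by (intros a b h; apply (ssrbool.elimT (E a b)); exact h).
destruct (@classical_sets.ZL_preorder T t0 (fun a b => boolp.asbool (R a b))) as [t Ht0].
- intro t; apply I1; auto.
- intros r s t H1 H2; apply I1; apply (Ht r s t); apply I2; auto.
- intros A HA. destruct (Hc A) as [t Hx].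
  + intros s t Hs Htt; destruct (HA s t Hs Htt) as [H|H]; [left|right]; apply I2; exact H.
  + exists t; intros s Hs; apply I1; auto.
- exists t; intros s Hs. apply I2. apply Ht0. apply I1. exact Hs.
Qed.

Lemma rev_geo {X} (d : X -> X -> R) c x x' :
  is_metric d -> geodesic_joining d c x x' ->
  geodesic_joining d (fun s => c (d x x' - s)) x' x.
Proof.
intros Hm [[Hl Hg] [H0 H1]]. unfold geodesic_joining, geodesic. rewrite (m_sym d Hm x' x).
split; [split|split].
- exact Hl.
- intros s t Hs Ht. rewrite Hg by lra. rewrite Rabs_minus_sym. f_equal; ring.
- rewrite Rminus_0_r; exact H1.
- rewrite Rminus_diag; exact H0.
Qed.

Lemma concat_geo {X} (d : X -> X -> R) g1 g2 a q b :
  is_metric d -> geodesic_joining d g1 a q -> geodesic_joining d g2 q b ->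
  d a q + d q b = d a b ->
  geodesic_joining d (fun s => if Rle_dec s (d a q) then g1 s else g2 (s - d a q)) a b.
Proof.
intros Hm G1 G2 Hsum.
pose proof (m_nonneg d Hm a q) as P1. pose proof (m_nonneg d Hm q b) as P2.
assert (Hmix : forall s t, 0 <= s <= d a q -> d a q < t <= d a b ->
          d (g1 s) (g2 (t - d a q)) = Rabs (s - t)).
{ intros s t Hs Ht. rewrite Rabs_left1 by lra.
  apply Rle_antisym.
  - eapply Rle_trans. apply (m_tri d Hm _ q _).
    rewrite (geo_d2 d g1 a q G1 s Hs). rewrite (geo_d d g2 q b G2) by lra. lra.
  - pose proof (m_tri d Hm a (g1 s) b) as T1.
    pose proof (m_tri d Hm (g1 s) (g2 (t - d a q)) b) as T2.
    rewrite (geo_d d g1 a q G1 s Hs) in T1.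
    rewrite (geo_d2 d g2 q b G2) in T2 by lra. lra. }
destruct G1 as [[L1 Hg1] [A1 B1]]. destruct G2 as [[L2 Hg2] [A2 B2]].
split; [split|split].
- lra.
- intros s t Hs Ht.
  destruct (Rle_dec s (d a q)) as [hs|hs]; destruct (Rle_dec t (d a q)) as [ht|ht].
  + apply Hg1; lra.
  + apply Hmix; lra.
  + rewrite (m_sym d Hm). rewrite Rabs_minus_sym. apply Hmix; lra.
  + rewrite Hg2 by lra. f_equal. ring.
- destruct (Rle_dec 0 (d a q)) as [h|h]; [exact A1|lra].
- destruct (Rle_dec (d a b) (d a q)) as [h|h].
  + assert (d q b = 0) by lra. apply (m_eq0 d Hm) in H.
    replace (d a b) with (d a q) by lra. rewrite B1. exact H.
  + replace (d a b - d a q) with (d q b) by lra. exact B2.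
Qed.

Lemma mid_unique {X} (d : X -> X -> R) a b q q' r :
  is_metric d -> busemann_convex d -> geodesic_space d ->
  d a q = r -> d q b = r -> d a q' = r -> d q' b = r -> d a b = 2 * r -> q = q'.
Proof.
intros Hm Hb Hg E1 E2 E3 E4 E5.
destruct (Hg a q) as [g1 G1]. destruct (Hg q b) as [g2 G2].
destruct (Hg a q') as [h1 H1]. destruct (Hg q' b) as [h2 H2].
pose proof (concat_geo d g1 g2 a q b Hm G1 G2 ltac:(lra)) as C1.
pose proof (concat_geo d h1 h2 a q' b Hm H1 H2 ltac:(lra)) as C2.
set (F1 := fun s => if Rle_dec s (d a q) then g1 s else g2 (s - d a q)) in C1.
set (F2 := fun s => if Rle_dec s (d a q') then h1 s else h2 (s - d a q')) in C2.
assert (V1 : F1 r = q).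
{ unfold F1. destruct (Rle_dec r (d a q)) as [_|h]; [|lra]. destruct G1 as [_ [_ Q1]]. rewrite <- E1. exact Q1. }
assert (V2 : F2 r = q').
{ unfold F2. destruct (Rle_dec r (d a q')) as [_|h]; [|lra]. destruct H1 as [_ [_ Q1]]. rewrite <- E3. exact Q1. }
assert (Ht : 0 <= 1/2 <= 1) by lra.
pose proof (bus_j d F1 F2 a b a b (1/2) Hb C1 C2 Ht) as B.
rewrite (m_refl d Hm a), (m_refl d Hm b) in B.
replace (1/2 * d a b) with r in B by lra.
rewrite V1, V2 in B.
apply (m_eq0 d Hm). pose proof (m_nonneg d Hm q q'). lra.
Qed.

Lemma halve {X} (d : X -> X -> R) c x x' y D :
  is_metric d -> busemann_convex d -> geodesic_space d ->
  geodesic_joining d c x x' ->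
  (forall t, 0 <= t <= d x x' -> d y (c t) = D) ->
  exists p, forall t, 0 <= t <= d x x' -> d p (c t) = D / 2.
Proof.
intros Hm Hb Hg Hc Hf.
pose proof (m_nonneg d Hm x x') as PL.
assert (Dx : d y x = D).
{ destruct Hc as [_ [H0 _]]. rewrite <- H0. apply Hf. lra. }
assert (Dx' : d y x' = D).
{ destruct Hc as [_ [_ H1]]. rewrite <- H1. apply Hf. lra. }
pose proof (m_nonneg d Hm y x) as PD. rewrite Dx in PD.
destruct (Hg y x) as [g0 G0]. destruct (Hg y x') as [gL GL].
pose proof (rev_geo d c x x' Hm Hc) as Cr.
assert (Ht : 0 <= 1/2 <= 1) by lra.
pose proof (bus_j d _ _ x x' y x' (1/2) Hb Hc GL Ht) as B1.
pose proof (bus_j d _ _ x' x y x (1/2) Hb Cr G0 Ht) as B2.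
simpl in B2.
rewrite (m_sym d Hm x' x) in B2.
replace (d x x' - 1/2 * d x x') with (1/2 * d x x') in B2 by lra.
rewrite (m_refl d Hm) in B1, B2. rewrite (m_sym d Hm x y), Dx' in B1.
rewrite (m_sym d Hm x' y), Dx' in B2. rewrite Dx in B2.
set (z := c (1/2 * d x x')) in *.
assert (Dz : d y z = D) by (apply Hf; lra).
set (q0 := g0 (1/2 * D)) in *. set (q1 := gL (1/2 * D)) in *.
assert (Q0 : d y q0 = D/2).
{ unfold q0. rewrite (geo_d d g0 y x G0) by lra. lra. }
assert (Q1 : d y q1 = D/2).
{ unfold q1. rewrite (geo_d d gL y x' GL) by lra. lra. }
assert (Z0 : d q0 z = D/2).
{ pose proof (m_tri d Hm y q0 z). rewrite (m_sym d Hm q0 z) in *. rewrite Dx in *. lra. }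
assert (Z1 : d q1 z = D/2).
{ pose proof (m_tri d Hm y q1 z). rewrite (m_sym d Hm q1 z) in *. rewrite Dx in *. lra. }
assert (E : q0 = q1).
{ apply (mid_unique d y z q0 q1 (D/2) Hm Hb Hg); lra. }
assert (Px : d q0 x = D/2).
{ unfold q0. rewrite (geo_d2 d g0 y x G0) by lra. lra. }
assert (Px' : d q0 x' = D/2).
{ rewrite E. unfold q1. rewrite (geo_d2 d gL y x' GL) by lra. lra. }
exists q0. intros t Htt. apply Rle_antisym.
- apply (ball_geo d c x x' q0 (D/2) t Hm Hb Hc Htt); lra.
- pose proof (m_tri d Hm y q0 (c t)). rewrite Hf in H by exact Htt. lra.
Qed.

Lemma pow2_ge (n : nat) : INR n + 1 <= 2 ^ n.
Proof.
induction n as [|n IH]. simpl; lra.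
rewrite S_INR. change (2 ^ S n) with (2 * 2 ^ n). pose proof (pos_INR n). lra.
Qed.

Lemma flat {X} (d : X -> X -> R) c x x' y D :
  is_metric d -> busemann_convex d -> geodesic_space d ->
  geodesic_joining d c x x' ->
  (forall t, 0 <= t <= d x x' -> d y (c t) = D) -> x = x'.
Proof.
intros Hm Hb Hg Hc Hf.
assert (Hn : forall n y D, (forall t, 0 <= t <= d x x' -> d y (c t) = D) ->
          d x x' * 2 ^ n <= 2 * D).
{ intro n. induction n as [|n IH]; intros y0 D0 H0.
  - simpl. pose proof (m_nonneg d Hm x x').
    destruct Hc as [_ [C0 C1]].
    pose proof (m_tri d Hm x y0 x') as T.
    rewrite (m_sym d Hm x y0) in T.
    assert (d y0 x = D0) by (rewrite <- C0; apply H0; lra).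
    assert (d y0 x' = D0) by (rewrite <- C1; apply H0; lra). lra.
  - destruct (halve d c x x' y0 D0 Hm Hb Hg Hc H0) as [p Hp].
    specialize (IH p (D0/2) Hp). simpl. lra. }
apply (m_eq0 d Hm). pose proof (m_nonneg d Hm x x') as PL.
destruct (Rle_lt_or_eq_dec 0 (d x x') PL) as [Hlt|Heq]; [exfalso|lra].
specialize (Hn O y D Hf) as H0. simpl in H0.
assert (Hp : 0 < / d x x') by (apply Rinv_0_lt_compat; lra).
destruct (archimed (2 * D / d x x')) as [H1 _].
assert (Hz : (0 <= up (2 * D / d x x'))%Z).
{ apply le_IZR. assert (0 <= 2 * D / d x x'). { unfold Rdiv. apply Rmult_le_pos; lra. } lra. }
destruct (IZN _ Hz) as [n En]. rewrite En, <- INR_IZR_INZ in H1.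
specialize (Hn n y D Hf). pose proof (pow2_ge n).
assert (d x x' * INR n > 2 * D).
{ apply (Rmult_lt_reg_r (/ d x x')); [exact Hp|].
  replace (d x x' * INR n * / d x x') with (INR n) by (field; lra). exact H1. }
assert (d x x' * (INR n + 1) <= d x x' * 2 ^ n) by (apply Rmult_le_compat_l; lra).
lra.
Qed.

Lemma eps_le (a b : R) : (forall eps, 0 < eps -> a <= b + eps) -> a <= b.
Proof.
intros H. destruct (Rle_or_lt a b) as [h|h]; [exact h|].
specialize (H ((a - b) / 2) ltac:(lra)). lra.
Qed.

Lemma n_small (eps : R) : 0 < eps -> exists n : nat, / (INR n + 1) < eps.
Proof.
intros He. destruct (archimed (/ eps)) as [H1 _].
assert (Hp : 0 < / eps) by (apply Rinv_0_lt_compat; lra).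
assert (Hz : (0 <= up (/ eps))%Z) by (apply le_IZR; lra).
destruct (IZN _ Hz) as [n Hn]. rewrite Hn, <- INR_IZR_INZ in H1.
exists n. rewrite <- (Rinv_inv eps). apply Rinv_lt_contravar.
- apply Rmult_lt_0_compat; lra.
- lra.
Qed.

Lemma closed_ball_and {X} (d : X -> X -> R) (E : X -> Prop) z r :
  is_metric d -> metric_closed d E -> metric_closed d (fun y => E y /\ d z y <= r).
Proof.
intros Hm HE y Hy. split.
- apply HE. intros eps He. destruct (Hy eps He) as [a [[Ea _] Hd]]. exists a; split; assumption.
- apply eps_le. intros eps He. destruct (Hy eps He) as [a [[_ Ha] Hd]].
  pose proof (m_tri d Hm z a y). rewrite (m_sym d Hm a y) in H. lra.
Qed.

Lemma convex_ball_and {X} (d : X -> X -> R) (E : X -> Prop) z r :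
  is_metric d -> busemann_convex d -> convex d E -> convex d (fun y => E y /\ d z y <= r).
Proof.
intros Hm Hb HE x y c [Ex hx] [Ey hy] Hc t Ht. split.
- apply (HE x y c Ex Ey Hc t Ht).
- apply (ball_geo d c x y z r t Hm Hb Hc Ht hx hy).
Qed.

Lemma refl_seq {X} (d : X -> X -> R) (S : nat -> X -> Prop) :
  reflexive d ->
  (forall m n, (m <= n)%nat -> forall x, S n x -> S m x) ->
  (forall n, nonempty (S n) /\ metric_closed d (S n) /\ convex d (S n) /\ metric_bounded d (S n)) ->
  exists x, forall n, S n x.
Proof.
intros Hr Hmono Hp.
destruct (Hr (fun C => exists n, C = S n)) as [x Hx].
- exists (S O), O. reflexivity.
- intros C1 C2 [n1 E1] [n2 E2]. subst C1 C2.
  destruct (Nat.le_ge_cases n1 n2) as [h|h].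
  + right. apply Hmono; exact h.
  + left. apply Hmono; exact h.
- intros C [n E]. subst C. apply Hp.
- exists x. intro n. apply Hx. exists n. reflexivity.
Qed.

Lemma partner {X} (d : X -> X -> R) (E : X -> Prop) x r0 :
  is_metric d -> busemann_convex d -> reflexive d ->
  metric_closed d E -> convex d E ->
  (forall eps, 0 < eps -> exists y, E y /\ d x y < r0 + eps) ->
  exists y, E y /\ d x y <= r0.
Proof.
intros Hm Hb Hr HE HcE Ha.
destruct (refl_seq d (fun n y => E y /\ d x y <= r0 + / (INR n + 1)) Hr) as [y Hy].
- intros m n Hmn z [Ez hz]. split; [exact Ez|]. pose proof (inv_mono_n m n Hmn). lra.
- intro n. split; [|split; [|split]].
  + destruct (Ha _ (inv_pos_n n)) as [y [Ey hy]]. exists y. split; [exact Ey|lra].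
  + apply closed_ball_and; assumption.
  + apply convex_ball_and; assumption.
  + exists x, (r0 + 1). intros a [_ ha]. pose proof (inv_mono_n 0 n (Nat.le_0_l n)) as H.
    simpl in H. rewrite Rplus_0_l, Rinv_1 in H. lra.
- exists y. split; [apply (Hy O)|]. apply small_le. intro n. apply (Hy n).
Qed.

Definition PP {X} (d : X -> X -> R) (D : R) (E1 E2 : X -> Prop) : X -> Prop :=
  fun x => E1 x /\ exists y, E2 y /\ d x y = D.

Lemma pp_closed {X} (d : X -> X -> R) (E1 E2 : X -> Prop) D :
  is_metric d -> busemann_convex d -> reflexive d ->
  metric_closed d E1 -> metric_closed d E2 -> convex d E2 ->
  (forall x y, E1 x -> E2 y -> D <= d x y) ->
  metric_closed d (PP d D E1 E2).
Proof.
intros Hm Hb Hr H1 H2 Hc2 Hlow x Hx. split.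
- apply H1. intros eps He. destruct (Hx eps He) as [a [[Ea _] Hd]]. exists a; split; assumption.
- destruct (partner d E2 x D Hm Hb Hr H2 Hc2) as [y [Ey hy]].
  + intros eps He. destruct (Hx (eps/2) ltac:(lra)) as [a [[Ea [b [Eb Hab]]] Hd]].
    exists b. split; [exact Eb|]. pose proof (m_tri d Hm x a b). lra.
  + exists y. split; [exact Ey|]. apply Rle_antisym; [exact hy|].
    apply Hlow; [|exact Ey]. apply H1. intros eps He. destruct (Hx eps He) as [a [[Ea _] Hd]].
    exists a; split; assumption.
Qed.

Lemma pp_convex {X} (d : X -> X -> R) (E1 E2 : X -> Prop) D :
  is_metric d -> busemann_convex d -> geodesic_space d ->
  convex d E1 -> convex d E2 ->
  (forall x y, E1 x -> E2 y -> D <= d x y) ->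
  convex d (PP d D E1 E2).
Proof.
intros Hm Hb Hg H1 H2 Hlow x x' c [Ex [y [Ey Exy]]] [Ex' [y' [Ey' Exy']]] Hc t Ht.
assert (E1c : E1 (c t)) by (apply (H1 x x' c Ex Ex' Hc t Ht)).
split; [exact E1c|].
destruct (tau_ex t (d x x') Ht) as [tau [Htau Et]].
destruct (Hg y y') as [c2 Hc2].
pose proof (m_nonneg d Hm y y').
assert (E2p : E2 (c2 (tau * d y y'))).
{ apply (H2 y y' c2 Ey Ey' Hc2). split. apply Rmult_le_pos; lra.
  rewrite <- (Rmult_1_l (d y y')) at 2. apply Rmult_le_compat_r; lra. }
exists (c2 (tau * d y y')). split; [exact E2p|].
apply Rle_antisym.
- pose proof (bus_j d c c2 x x' y y' tau Hb Hc Hc2 Htau) as B. rewrite <- Et, Exy, Exy' in B. lra.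
- apply Hlow; assumption.
Qed.

Lemma delta_spec {X} (d : X -> X -> R) (K1 K2 : X -> Prop) :
  is_metric d -> nonempty K1 -> nonempty K2 -> metric_bounded d K1 -> metric_bounded d K2 ->
  (forall x y, K1 x -> K2 y -> d x y <= delta d K1 K2) /\
  (forall r, (forall x y, K1 x -> K2 y -> d x y <= r) -> delta d K1 K2 <= r).
Proof.
intros Hm [x0 H0] [y0 H0'] [z1 [M1 HM1]] [z2 [M2 HM2]].
destruct (lub_spec (fun r => exists x y, K1 x /\ K2 y /\ r = d x y)) as [L1 L2].
- exists (d x0 y0), x0, y0. auto.
- exists (M1 + d z1 z2 + M2). intros r [x [y [Hx [Hy ->]]]].
  pose proof (m_tri d Hm x z1 y). pose proof (m_tri d Hm z1 z2 y).
  specialize (HM1 x Hx). specialize (HM2 y Hy). rewrite (m_sym d Hm x z1) in H. lra.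
- split.
  + intros x y Hx Hy. apply L1. exists x, y. auto.
  + intros r Hr. apply L2. intros s [x [y [Hx [Hy ->]]]]. apply Hr; assumption.
Qed.

Lemma deltapt_spec {X} (d : X -> X -> R) (K2 : X -> Prop) x :
  is_metric d -> nonempty K2 -> metric_bounded d K2 ->
  forall y, K2 y -> d x y <= delta_pt d x K2.
Proof.
intros Hm [y0 H0] [z [M HM]].
destruct (lub_spec (fun r => exists y, K2 y /\ r = d x y)) as [L1 L2].
- exists (d x y0), y0. auto.
- exists (d x z + M). intros r [y [Hy ->]]. pose proof (m_tri d Hm x z y). specialize (HM y Hy). lra.
- intros y Hy. apply L1. exists y. auto.
Qed.

Lemma dist_eq {X} (d : X -> X -> R) (K1 K2 : X -> Prop) D x0 y0 :
  is_metric d -> (forall x y, K1 x -> K2 y -> D <= d x y) -> K1 x0 -> K2 y0 -> d x0 y0 = D ->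
  dist_sets d K1 K2 = D.
Proof.
intros Hm Hl H1 H2 E.
destruct (glb_spec (fun r => exists x y, K1 x /\ K2 y /\ r = d x y)) as [G1 G2].
- exists (d x0 y0), x0, y0. auto.
- intros r [x [y [_ [_ ->]]]]. apply m_nonneg; exact Hm.
- unfold dist_sets. apply Rle_antisym.
  + rewrite <- E. apply G1. exists x0, y0. auto.
  + apply G2. intros r [x [y [Hx [Hy ->]]]]. apply Hl; assumption.
Qed.

Record good {X} (d : X -> X -> R) (A B : X -> Prop) (T : X -> X) (D : R) (E1 E2 : X -> Prop) : Prop :=
  mkgood {
    gA : forall x, E1 x -> A x;
    gB : forall y, E2 y -> B y;
    gc1 : metric_closed d E1;
    gc2 : metric_closed d E2;
    gv1 : convex d E1;
    gv2 : convex d E2;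
    gb1 : metric_bounded d E1;
    gb2 : metric_bounded d E2;
    gt1 : forall x, E1 x -> E1 (T x);
    gt2 : forall y, E2 y -> E2 (T y);
    gp : exists x y, E1 x /\ E2 y /\ d x y = D }.

Lemma bounded_sub {X} (d : X -> X -> R) (E F : X -> Prop) :
  metric_bounded d E -> (forall x, F x -> E x) -> metric_bounded d F.
Proof. intros [z [M HM]] H. exists z, M. intros a Ha. apply HM, H, Ha. Qed.

Theorem mainTheorem3 (X : Type) (d : X -> X -> R) (A B : X -> Prop) (T : X -> X) :
  is_metric d -> geodesic_space d -> busemann_convex d -> reflexive d ->
  nonempty A -> nonempty B -> metric_closed d A -> metric_closed d B ->
  convex d A -> convex d B -> metric_bounded d A ->
  (forall x, A x \/ B x -> A (T x) \/ B (T x)) ->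
  noncyclic A B T -> relatively_nonexpansive d A B T ->
  proximal_normal_structure d A B ->
  exists x y, A x /\ B y /\ x = T x /\ y = T y /\ d x y = dist_sets d A B.
Proof.
intros Hm Hg Hb Hr [a0 HA0] [b0 HB0] HcA HcB HvA HvB HbA _ [HTA HTB] HT Hpns.
set (D := dist_sets d A B).
assert (HD : (forall x y, A x -> B y -> D <= d x y) /\
   (forall b, (forall r, (exists x y, A x /\ B y /\ r = d x y) -> b <= r) -> b <= D)).
{ unfold D, dist_sets.
  destruct (glb_spec (fun r => exists x y, A x /\ B y /\ r = d x y)) as [G1 G2].
  - exists (d a0 b0), a0, b0; auto.
  - intros r [x [y [_ [_ ->]]]]; apply m_nonneg; exact Hm.
  - split; [intros x y Hx Hy; apply G1; exists x, y; auto | exact G2]. }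
destruct HD as [Hlow Hglb].
assert (Hlow' : forall y x, B y -> A x -> D <= d y x).
{ intros y x Hy Hx. rewrite (m_sym d Hm). apply Hlow; assumption. }
assert (Happ : forall eps, 0 < eps -> exists x y, A x /\ B y /\ d x y < D + eps).
{ intros eps He. apply NNPP; intro Hn. assert (D + eps <= D); [|lra].
  apply Hglb. intros r [x [y [Hx [Hy ->]]]]. apply Rnot_lt_le; intro Hl. apply Hn.
  exists x, y; auto. }
(* Step 1: D is attained *)
destruct (refl_seq d (fun n x => A x /\ forall del, 0 < del ->
             exists y, B y /\ d x y < D + / (INR n + 1) + del) Hr) as [x0 Hx0].
{ intros m n h x [Ax Hx]; split; [exact Ax|]. intros del Hdel.
  destruct (Hx del Hdel) as [y [By hy]]. exists y; split; [exact By|].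
  pose proof (inv_mono_n m n h). lra. }
{ intro n; split; [|split; [|split]].
  - destruct (Happ _ (inv_pos_n n)) as [x [y [Ax [By h]]]]. exists x; split; [exact Ax|].
    intros del Hdel. exists y; split; [exact By|lra].
  - intros x Hx; split.
    + apply HcA. intros eps He. destruct (Hx eps He) as [a [[Aa _] h]]. exists a; auto.
    + intros del Hdel. destruct (Hx (del/2) ltac:(lra)) as [a [[Aa Ha] hxa]].
      destruct (Ha (del/2) ltac:(lra)) as [y [By hy]]. exists y; split; [exact By|].
      pose proof (m_tri d Hm x a y). lra.
  - intros x x' c [Ax Hx] [Ax' Hx'] Hc t Ht. split.
    + apply (HvA x x' c Ax Ax' Hc t Ht).
    + intros del Hdel. destruct (Hx del Hdel) as [y [By hy]].
      destruct (Hx' del Hdel) as [y' [By' hy']].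
      destruct (tau_ex t _ Ht) as [tau [Htau Et]]. destruct (Hg y y') as [c2 Hc2].
      pose proof (m_nonneg d Hm y y').
      exists (c2 (tau * d y y')). split.
      * apply (HvB y y' c2 By By' Hc2). split. apply Rmult_le_pos; lra.
        rewrite <- (Rmult_1_l (d y y')) at 2. apply Rmult_le_compat_r; lra.
      * pose proof (bus_j d c c2 x x' y y' tau Hb Hc Hc2 Htau) as Bu. rewrite <- Et in Bu.
        set (m := Rmax (d x y) (d x' y')) in *.
        assert (m < D + / (INR n + 1) + del) by (unfold m; apply Rmax_lub_lt; assumption).
        assert ((1 - tau) * d x y <= (1 - tau) * m) by (apply Rmult_le_compat_l; [lra|apply Rmax_l]).
        assert (tau * d x' y' <= tau * m) by (apply Rmult_le_compat_l; [lra|apply Rmax_r]).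
        lra.
  - destruct HbA as [z [M HM]]. exists z, M. intros a [Aa _]. auto. }
assert (Ax0 : A x0) by apply (Hx0 O).
destruct (partner d B x0 D Hm Hb Hr HcB HvB) as [y0 [By0 hy0]].
{ intros eps He. destruct (n_small (eps/2) ltac:(lra)) as [n Hn].
  destruct (proj2 (Hx0 n) (eps/2) ltac:(lra)) as [y [By hy]]. exists y; split; [exact By|lra]. }
assert (Exy0 : d x0 y0 = D) by (apply Rle_antisym; [exact hy0|apply Hlow; assumption]).
assert (Hgood0 : good d A B T D (PP d D A B) (PP d D B A)).
{ constructor.
  - intros x [h _]; exact h.
  - intros x [h _]; exact h.
  - apply pp_closed; assumption.
  - apply pp_closed; assumption.
  - apply pp_convex; assumption.
  - apply pp_convex; assumption.
  - apply (bounded_sub d A); [exact HbA|]. intros x [h _]; exact h.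
  - destruct HbA as [z [M HM]]. exists z, (M + D). intros y [By [x [Ax Hyx]]].
    pose proof (m_tri d Hm z x y). rewrite (m_sym d Hm x y) in H. specialize (HM x Ax). lra.
  - intros x [Ax [y [By h]]]. split; [apply HTA; exact Ax|]. exists (T y).
    split; [apply HTB; exact By|]. apply Rle_antisym.
    + rewrite <- h. apply HT; assumption.
    + apply Hlow; auto.
  - intros y [By [x [Ax h]]]. split; [apply HTB; exact By|]. exists (T x).
    split; [apply HTA; exact Ax|]. rewrite (m_sym d Hm). apply Rle_antisym.
    + rewrite <- h, (m_sym d Hm y x). apply HT; assumption.
    + apply Hlow; auto.
  - exists x0, y0. split; [split; [exact Ax0|exists y0; auto]|].
    split; [split; [exact By0|exists x0; split; [exact Ax0|rewrite (m_sym d Hm); exact Exy0]]|exact Exy0]. }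
set (G := {p : (X -> Prop) * (X -> Prop) | good d A B T D (fst p) (snd p)}).
set (Rl := fun p q : G => forall x, (fst (proj1_sig q) x -> fst (proj1_sig p) x) /\
                                 (snd (proj1_sig q) x -> snd (proj1_sig p) x)).
destruct (ZL_prop G (exist _ (PP d D A B, PP d D B A) Hgood0) Rl) as [[[K1 K2] HK] Hmax].
- intros t x. split; auto.
- intros r s t H1 H2 x. split; intro h.
  + apply (proj1 (H1 x)), (proj1 (H2 x)), h.
  + apply (proj2 (H1 x)), (proj2 (H2 x)), h.
- intros Ch Htot. destruct (classic (exists p, Ch p)) as [[p0 Hp0]|Hne].
  2:{ exists (exist _ (PP d D A B, PP d D B A) Hgood0). intros s Hs. exfalso. apply Hne. exists s; exact Hs. }
  set (I1 := fun x => forall p, Ch p -> fst (proj1_sig p) x).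
  set (I2 := fun x => forall p, Ch p -> snd (proj1_sig p) x).
  assert (HI : good d A B T D I1 I2).
  { destruct p0 as [[P1 P2] HP].
    assert (Hin1 : forall x, I1 x -> P1 x) by (intros x h; apply (h _ Hp0)).
    assert (Hin2 : forall x, I2 x -> P2 x) by (intros x h; apply (h _ Hp0)).
    constructor.
    - intros x h. apply (gA _ _ _ _ _ _ _ HP). apply Hin1, h.
    - intros x h. apply (gB _ _ _ _ _ _ _ HP). apply Hin2, h.
    - intros x Hx [[Q1 Q2] HQ] Hq. simpl. apply (gc1 _ _ _ _ _ _ _ HQ).
      intros eps He. destruct (Hx eps He) as [a [Ha hd]]. exists a. split; [apply (Ha _ Hq)|exact hd].
    - intros x Hx [[Q1 Q2] HQ] Hq. simpl. apply (gc2 _ _ _ _ _ _ _ HQ).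
      intros eps He. destruct (Hx eps He) as [a [Ha hd]]. exists a. split; [apply (Ha _ Hq)|exact hd].
    - intros x x' c Hx Hx' Hc t Ht [[Q1 Q2] HQ] Hq. simpl.
      apply (gv1 _ _ _ _ _ _ _ HQ x x' c (Hx _ Hq) (Hx' _ Hq) Hc t Ht).
    - intros x x' c Hx Hx' Hc t Ht [[Q1 Q2] HQ] Hq. simpl.
      apply (gv2 _ _ _ _ _ _ _ HQ x x' c (Hx _ Hq) (Hx' _ Hq) Hc t Ht).
    - apply (bounded_sub d P1); [apply (gb1 _ _ _ _ _ _ _ HP)|exact Hin1].
    - apply (bounded_sub d P2); [apply (gb2 _ _ _ _ _ _ _ HP)|exact Hin2].
    - intros x h [[Q1 Q2] HQ] Hq. simpl. apply (gt1 _ _ _ _ _ _ _ HQ). apply (h _ Hq).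
    - intros x h [[Q1 Q2] HQ] Hq. simpl. apply (gt2 _ _ _ _ _ _ _ HQ). apply (h _ Hq).
    - destruct (Hr (fun C => exists p, Ch p /\ C = PP d D (fst (proj1_sig p)) (snd (proj1_sig p))))
        as [x Hx].
      + exists (PP d D P1 P2), (exist _ (P1,P2) HP). split; [exact Hp0|]. reflexivity.
      + intros C1 C2 [p [Hp E1]] [q [Hq E2]]. subst C1 C2.
        destruct (Htot p q Hp Hq) as [H|H].
        * right. intros x [h1 [y [h2 h3]]]. split; [apply (proj1 (H x)), h1|].
          exists y. split; [apply (proj2 (H y)), h2|exact h3].
        * left. intros x [h1 [y [h2 h3]]]. split; [apply (proj1 (H x)), h1|].
          exists y. split; [apply (proj2 (H y)), h2|exact h3].
      + intros C [[[Q1 Q2] HQ] [Hq EC]]. subst C. simpl.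
        destruct HQ as [qA qB qc1 qc2 qv1 qv2 qb1 qb2 qt1 qt2 [x [y [qx [qy qxy]]]]].
        assert (ql : forall x y, Q1 x -> Q2 y -> D <= d x y) by (intros; apply Hlow; auto).
        split; [|split; [|split]].
        * exists x. split; [exact qx|exists y; auto].
        * apply pp_closed; assumption.
        * apply pp_convex; assumption.
        * apply (bounded_sub d Q1); [exact qb1|]. intros a [h _]; exact h.
      + destruct (Hr (fun C => exists p, Ch p /\ C = fun y => snd (proj1_sig p) y /\ d x y <= D))
          as [y Hy].
        * exists (fun y => P2 y /\ d x y <= D), (exist _ (P1,P2) HP). split; [exact Hp0|]. reflexivity.
        * intros C1 C2 [p [Hp E1]] [q [Hq E2]]. subst C1 C2.
          destruct (Htot p q Hp Hq) as [H|H].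
          -- right. intros z [h1 h2]. split; [apply (proj2 (H z)), h1|exact h2].
          -- left. intros z [h1 h2]. split; [apply (proj2 (H z)), h1|exact h2].
        * intros C [[[Q1 Q2] HQ] [Hq EC]]. subst C. simpl.
          assert (Hxq := Hx _ (ex_intro _ (exist _ (Q1, Q2) HQ) (conj Hq eq_refl))).
          destruct Hxq as [_ [y [qy qxy]]]. simpl in qy.
          pose proof HQ as HQ'. destruct HQ' as [qA qB qc1 qc2 qv1 qv2 qb1 qb2 qt1 qt2 _].
          split; [|split; [|split]].
          -- exists y. split; [exact qy|lra].
          -- apply closed_ball_and; assumption.
          -- apply convex_ball_and; assumption.
          -- apply (bounded_sub d Q2); [exact qb2|]. intros a [h _]; exact h.
        * exists x, y.
          assert (HxP : PP d D P1 P2 x).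
          { apply Hx. exists (exist _ (P1,P2) HP). split; [exact Hp0|]. reflexivity. }
          assert (HyP : P2 y /\ d x y <= D).
          { apply Hy. exists (exist _ (P1,P2) HP). split; [exact Hp0|]. reflexivity. }
          split; [|split].
          -- intros p Hp. apply (proj1 (Hx _ (ex_intro _ p (conj Hp eq_refl)))).
          -- intros p Hp. apply (proj1 (Hy _ (ex_intro _ p (conj Hp eq_refl)))).
          -- apply Rle_antisym; [apply HyP|]. apply Hlow.
             ++ apply (gA _ _ _ _ _ _ _ HP). apply HxP.
             ++ apply (gB _ _ _ _ _ _ _ HP). apply HyP. }
  exists (exist _ (I1, I2) HI). intros s Hs x. simpl. split; intro h; apply h; exact Hs.
- simpl in HK.
  assert (Min : forall E1 E2, good d A B T D E1 E2 -> (forall x, E1 x -> K1 x) ->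
             (forall x, E2 x -> K2 x) -> (forall x, K1 x -> E1 x) /\ (forall x, K2 x -> E2 x)).
  { intros E1 E2 HE S1 S2. specialize (Hmax (exist _ (E1, E2) HE)).
    simpl in Hmax. assert (H := Hmax (fun x => conj (S1 x) (S2 x))).
    split; intros x h; [apply (proj1 (H x)), h|apply (proj2 (H x)), h]. }
  destruct HK as [kA kB kc1 kc2 kv1 kv2 kb1 kb2 kt1 kt2 [xk [yk [kx [ky kxy]]]]].
  assert (kl : forall x y, K1 x -> K2 y -> D <= d x y) by (intros; apply Hlow; auto).
  assert (kl' : forall y x, K2 y -> K1 x -> D <= d y x)
    by (intros y x h1 h2; rewrite (m_sym d Hm); apply kl; auto).
  assert (P1 : forall x, K1 x -> exists y, K2 y /\ d x y = D).
  { assert (HG : good d A B T D (PP d D K1 K2) K2).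
    { constructor; auto.
      - intros x [h _]; auto.
      - apply pp_closed; assumption.
      - apply pp_convex; assumption.
      - apply (bounded_sub d K1); [exact kb1|]. intros a [h _]; exact h.
      - intros x [h [y [hy hxy]]]. split; [auto|]. exists (T y). split; [auto|].
        apply Rle_antisym; [rewrite <- hxy; apply HT; auto|apply kl; auto].
      - exists xk, yk. split; [split; [exact kx|exists yk; auto]|auto]. }
    destruct (Min _ _ HG) as [M1 _]; [intros x [h _]; exact h|auto|].
    intros x h. destruct (M1 x h) as [_ Hy]. exact Hy. }
  assert (P2 : forall y, K2 y -> exists x, K1 x /\ d y x = D).
  { assert (HG : good d A B T D K1 (PP d D K2 K1)).
    { constructor; auto.
      - intros x [h _]; auto.
      - apply pp_closed; assumption.
      - apply pp_convex; assumption.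
      - apply (bounded_sub d K2); [exact kb2|]. intros a [h _]; exact h.
      - intros y [h [x [hx hxy]]]. split; [auto|]. exists (T x). split; [auto|].
        rewrite (m_sym d Hm).
        apply Rle_antisym; [rewrite <- hxy, (m_sym d Hm y x); apply HT; auto|apply kl; auto].
      - exists xk, yk. split; [exact kx|]. split; [|exact kxy]. red. split; [exact ky|].
        exists xk. split; [exact kx|]. rewrite (m_sym d Hm); exact kxy. }
    destruct (Min _ _ HG) as [_ M2]; [auto|intros x [h _]; exact h|].
    intros x h. destruct (M2 x h) as [_ Hy]. exact Hy. }
  assert (Hdist : dist_sets d K1 K2 = D) by (apply (dist_eq d K1 K2 D xk yk); auto).
  assert (ne1 : nonempty K1) by (exists xk; exact kx).
  assert (ne2 : nonempty K2) by (exists yk; exact ky).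
  destruct (delta_spec d K1 K2 Hm ne1 ne2 kb1 kb2) as [Dl1 Dl2].
  destruct (Rlt_or_le D (delta d K1 K2)) as [Hgt|Hle].
  + exfalso.
    destruct (Hpns K1 K2 ne1 ne2 kc1 kc2 kb1 kb2 kv1 kv2) as [x1 [x2 [h1 [h2 [h3 _]]]]].
    * intros a b ha hb. destruct (P1 a ha) as [b' [hb' e1]]. destruct (P2 b hb) as [a' [ha' e2]].
      exists a', b'. rewrite Hdist. split; [auto|split; [auto|split; [auto|]]].
      rewrite (m_sym d Hm); exact e2.
    * exact kA.
    * exact kB.
    * rewrite Hdist; reflexivity.
    * rewrite Hdist; exact Hgt.
    * set (r := delta_pt d x1 K2) in *.
      assert (Hr1 : forall y, K2 y -> d x1 y <= r) by (apply deltapt_spec; auto).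
      set (K1' := fun x => K1 x /\ forall y, K2 y -> d x y <= r).
      set (L2 := fun y => K2 y /\ forall x, K1' x -> d (T x) y <= r).
      assert (TL : forall y, K2 y -> L2 (T y)).
      { intros y hy. split; [auto|]. intros x [hx hxr].
        apply (Rle_trans _ (d x y)); [apply HT; auto|apply hxr; exact hy]. }
      assert (HG2 : good d A B T D K1 L2).
      { constructor; auto.
        - intros y [h _]; auto.
        - intros y Hy. split.
          + apply kc2. intros eps He. destruct (Hy eps He) as [a [[ha _] hd]]. exists a; auto.
          + intros x hx. apply eps_le. intros eps He. destruct (Hy eps He) as [a [[_ ha] hd]].
            pose proof (m_tri d Hm (T x) a y). rewrite (m_sym d Hm a y) in H.
            specialize (ha x hx). lra.
        - intros y y' c [hy hyr] [hy' hyr'] Hc t Ht. split.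
          + apply (kv2 y y' c hy hy' Hc t Ht).
          + intros x hx. apply (ball_geo d c y y' (T x) r t Hm Hb Hc Ht); auto.
        - apply (bounded_sub d K2); [exact kb2|]. intros a [h _]; exact h.
        - intros y [hy _]. apply TL; exact hy.
        - exists (T xk), (T yk). split; [auto|split; [apply TL; auto|]].
          apply Rle_antisym; [rewrite <- kxy; apply HT; auto|apply kl; auto]. }
      destruct (Min _ _ HG2) as [_ ML]; [auto|intros y [h _]; exact h|].
      assert (HG1 : good d A B T D K1' K2).
      { constructor; auto.
        - intros x [h _]; auto.
        - intros x Hx. split.
          + apply kc1. intros eps He. destruct (Hx eps He) as [a [[ha _] hd]]. exists a; auto.
          + intros y hy. apply eps_le. intros eps He. destruct (Hx eps He) as [a [[_ ha] hd]].
            pose proof (m_tri d Hm x a y). specialize (ha y hy). lra.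
        - intros x x' c [hx hxr] [hx' hxr'] Hc t Ht. split.
          + apply (kv1 x x' c hx hx' Hc t Ht).
          + intros y hy. rewrite (m_sym d Hm).
            apply (ball_geo d c x x' y r t Hm Hb Hc Ht); rewrite (m_sym d Hm); auto.
        - apply (bounded_sub d K1); [exact kb1|]. intros a [h _]; exact h.
        - intros x hx. split; [apply kt1, hx|]. intros y hy. apply (proj2 (ML y hy)). exact hx.
        - destruct (P1 x1 h1) as [y1 [hy1 e1]]. exists x1, y1.
          split; [split; auto|auto]. }
      destruct (Min _ _ HG1) as [M1 _]; [intros x [h _]; exact h|auto|].
      assert (delta d K1 K2 <= r).
      { apply Dl2. intros x y hx hy. apply (proj2 (M1 x hx)). exact hy. }
      lra.
  +
    assert (Hall : forall x y, K1 x -> K2 y -> d x y = D).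
    { intros x y hx hy. apply Rle_antisym; [apply (Rle_trans _ _ _ (Dl1 x y hx hy) Hle)|auto]. }
    assert (S1 : forall x, K1 x -> x = xk).
    { intros x hx. destruct (Hg xk x) as [c Hc]. symmetry.
      apply (flat d c xk x yk D Hm Hb Hg Hc). intros t Ht.
      rewrite (m_sym d Hm). apply Hall; [|exact ky]. apply (kv1 xk x c kx hx Hc t Ht). }
    assert (S2 : forall y, K2 y -> y = yk).
    { intros y hy. destruct (Hg yk y) as [c Hc]. symmetry.
      apply (flat d c yk y xk D Hm Hb Hg Hc). intros t Ht.
      apply Hall; [exact kx|]. apply (kv2 yk y c ky hy Hc t Ht). }
    exists xk, yk. split; [auto|split; [auto|split; [|split]]].
    * symmetry. apply S1, kt1, kx.
    * symmetry. apply S2, kt2, ky.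
    * exact kxy.
Qed.
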